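(* Let $\overline p$ be a Goresky–MacPherson perversity, let $X$ be an $n$-dimensional filtered space without strata of codimension $1$, and let $x_0$ be a regular point of $X$. Let $$\ell_{\overline p}=\sup\{k\in\overline{\mathbb N}\mid \overline p(k)=\overline t(k)\}=\sup\{k\in\overline{\mathbb N}\mid D\overline p(k)=0\},$$ called the cleaving point of $\overline p$. Then $$\pi_1^{\overline p}(X,x_0)=\pi_1^{\overline t}(X\setminus X_{n-\ell_{\overline p}-1},x_0).$$ Here $X\setminus X_{n-\ell_{\overline p}-1}$ carries the induced filtration and $X_m=\emptyset$ for $m\le-1$.
   Context: Filtered spaces. A filtered space of formal dimension $n$ is a nonempty space $X$ with closed subsets $\emptyset=X_{-1}\subseteq\cdots\subseteq X_{n-1}\subsetneq X_n=X$. Strata are the nonempty connected components of $X_i\setminus X_{i-1}$, with codimension $n-i$. Strata in $X\setminus X_{n-1}$ are regular. An open subset $U$ has the induced filtration $U\cap X_i$. Perversities. A GM perversity is a map $\overline p\colon\{2,3,\dots\}\to\mathbb N$ with $\overline p(2)=0$ and $\overline p(i)\le\overline p(i+1)\le\overline p(i)+1$. On a filtered space without codimension-one strata, it assigns $\overline p(\operatorname{codim}S)$ to each singular stratum $S$ and $0$ to regular strata. The top perversity is $\overline t(k)=k-2$, and $D\overline p(k)=k-2-\overline p(k)$. Full simplices and intersection homotopy groups. A simplex $\sigma\colon\Delta^j\to X$ is $\overline p$-allowable if $\dim\sigma^{-1}S\le j-\operatorname{codim}S+\overline p(S)$ for each singular stratum $S$. Here $\dim$ is polyhedral dimension, i.e.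 the minimal dimension of a polyhedron containing the set, with $\dim\emptyset=-\infty$. A simplex is $\overline p$-full if it and all iterated faces are allowable. The $\overline p$-full simplices form a Kan simplicial subset $\mathscr G_{\overline p}X\subseteq\mathrm{Sing}\,X$, and $\pi_1^{\overline p}(X,x_0)=\pi_1(\mathscr G_{\overline p}X,x_0)$. *)

(* Defs.v *)
From HB Require Import structures.
From mathcomp Require Import all_boot all_order all_algebra.
From mathcomp Require Import all_classical all_reals all_analysis.
From mathcomp Require Import Rstruct Rstruct_topology.
From Stdlib Require Import Relations.
Set Implicit Arguments. Unset Strict Implicit. Unset Printing Implicit Defensive.
Import Order.TTheory GRing.Theory Num.Theory.
Local Open Scope classical_set_scope.
Local Open Scope ring_scope.

Notation R := Rdefinitions.R.

Definition stdsimplex (j : nat) : set 'rV[R]_(j.+1) :=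
  [set v | (forall i, 0 <= v ord0 i) /\ \sum_i v ord0 i = 1].
Arguments stdsimplex j : clear implicits.

Definition face_map (j : nat) (i : 'I_(j.+2)) (v : 'rV[R]_(j.+1)) : 'rV[R]_(j.+2) :=
  \row_k (if unlift i k is Some k' then v ord0 k' else 0).

Definition pt0 : 'rV[R]_1 := const_mx 1.

Definition hull (m d : nat) (P : 'I_(d.+1) -> 'rV[R]_m) : set 'rV[R]_m :=
  [set v | exists w : 'I_(d.+1) -> R,
      (forall k, 0 <= w k) /\ \sum_k w k = 1 /\ v = \sum_k w k *: P k].

Definition in_polyhedron_dim_le (m d : nat) (A : set 'rV[R]_m) : Prop :=
  exists (N : nat) (P : 'I_N -> 'I_(d.+1) -> 'rV[R]_m),
    A `<=` \bigcup_(l in [set: 'I_N]) hull (P l).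

(* polyhedral dimension of A is <= d (d an integer; dim set0 = -oo) *)
Definition pdim_le (m : nat) (A : set 'rV[R]_m) (d : int) : Prop :=
  match d with
  | Posz k => in_polyhedron_dim_le k A
  | Negz _ => A = set0
  end.

(* p is only meaningful on {2,3,...} *)
Definition GM_perversity (p : nat -> nat) : Prop :=
  p 2 = 0%N /\ forall k, (2 <= k)%N -> (p k <= p k.+1 <= (p k).+1)%N.

Definition top_perv (k : nat) : nat := (k - 2)%N.
Definition dual_perv (p : nat -> nat) (k : nat) : nat := (k - 2 - p k)%N.

(* extended naturals N-bar = option nat, None = +oo *)
Definition nbar_le (a b : option nat) : Prop :=
  match a, b with
  | _, None => True
  | None, Some _ => False
  | Some a, Some b => (a <= b)%N
  end.

Definition is_cleaving_point (p : nat -> nat) (l : option nat) : Prop :=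
  (forall k, (2 <= k)%N -> p k = top_perv k -> nbar_le (Some k) l) /\
  (forall b : option nat,
     (forall k, (2 <= k)%N -> p k = top_perv k -> nbar_le (Some k) b) -> nbar_le l b).

Definition filtration (T : topologicalType) (n : nat) (F : int -> set T) : Prop :=
  (exists x : T, True) /\
  (forall i : int, i <= -1 -> F i = set0) /\
  (forall i : int, n%:Z <= i -> F i = setT) /\
  (forall i, closed (F i)) /\
  (forall i, F i `<=` F (i + 1)) /\
  F (n%:Z - 1) != setT.

(* We work with the filtered space U (an open subset of T with the induced
   filtration U `&` F i); U = setT gives X itself.
   S is a stratum of U of depth i (i.e. of codimension n - i):
   a nonempty connected component of U `&` (F i `\` F (i-1)). *)
Definition stratum (T : topologicalType) (F : int -> set T) (U : set T)
    (i : int) (S : set T) : Prop :=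
  exists2 x, (U `&` (F i `\` F (i - 1))) x &
    S = connected_component (U `&` (F i `\` F (i - 1))) x.

Definition no_codim_one (T : topologicalType) (n : nat) (F : int -> set T) : Prop :=
  F (n%:Z - 1) `\` F (n%:Z - 2) = set0.

Definition singular_simplex (T : topologicalType) (U : set T) (j : nat)
    (s : 'rV[R]_(j.+1) -> T) : Prop :=
  {within stdsimplex j, continuous s} /\ (forall v, stdsimplex j v -> U (s v)).

Definition allowable (T : topologicalType) (n : nat) (F : int -> set T) (U : set T)
    (p : nat -> nat) (j : nat) (s : 'rV[R]_(j.+1) -> T) : Prop :=
  forall (c : nat) (S : set T), (1 <= c)%N -> (c <= n)%N ->
    stratum F U (n%:Z - c%:Z) S ->
    pdim_le (stdsimplex j `&` (s @^-1` S)) (j%:Z - c%:Z + (p c)%:Z).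

Fixpoint full (T : topologicalType) (n : nat) (F : int -> set T) (U : set T)
    (p : nat -> nat) (j : nat) : ('rV[R]_(j.+1) -> T) -> Prop :=
  match j with
  | 0%N => fun s => allowable n F U p s
  | j'.+1 => fun s => allowable n F U p s /\
                      forall i : 'I_(j'.+2), full n F U p (s \o face_map i)
  end.

Definition Gsimplex (T : topologicalType) (n : nat) (F : int -> set T) (U : set T)
    (p : nat -> nat) (j : nat) (s : 'rV[R]_(j.+1) -> T) : Prop :=
  singular_simplex U s /\ full n F U p s.

Definition vtx (T : Type) (s : 'rV[R]_2 -> T) (i : 'I_2) : T := s (face_map i pt0).

Definition Gloop (T : topologicalType) (n : nat) (F : int -> set T) (U : set T)
    (p : nat -> nat) (x0 : T) (s : 'rV[R]_2 -> T) : Prop :=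
  Gsimplex n F U p s /\ vtx s ord0 = x0 /\ vtx s ord_max = x0.

Definition agree (T : Type) (j : nat) (s t : 'rV[R]_(j.+1) -> T) : Prop :=
  forall v, stdsimplex j v -> s v = t v.

Definition elem_htpy (T : topologicalType) (n : nat) (F : int -> set T) (U : set T)
    (p : nat -> nat) (x0 : T) (s t : 'rV[R]_2 -> T) : Prop :=
  agree s t \/
  exists w : 'rV[R]_3 -> T, Gsimplex n F U p w /\
    agree (w \o face_map (0 : 'I_3)) (fun _ => x0) /\
    agree (w \o face_map (1 : 'I_3)) t /\
    agree (w \o face_map (2 : 'I_3)) s.

(* two loops represent the same element of pi_1^p(U, x0) *)
Definition htpy (T : topologicalType) (n : nat) (F : int -> set T) (U : set T)
    (p : nat -> nat) (x0 : T) : relation ('rV[R]_2 -> T) :=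
  clos_refl_sym_trans _ (fun s t => Gloop n F U p x0 s /\ Gloop n F U p x0 t /\
                                    elem_htpy n F U p x0 s t).

(* The inclusion G_q V -> G_p U induces a well-defined bijection
   pi_1^q(V, x0) -> pi_1^p(U, x0) (a homomorphism, since it is induced by a
   simplicial map; hence an isomorphism of groups). *)
Definition pi1_incl_iso (T : topologicalType) (n : nat) (F : int -> set T)
    (V : set T) (q : nat -> nat) (U : set T) (p : nat -> nat) (x0 : T) : Prop :=
  (forall s, Gloop n F V q x0 s -> Gloop n F U p x0 s) /\
  (forall s t, Gloop n F V q x0 s -> Gloop n F V q x0 t ->
       htpy n F V q x0 s t -> htpy n F U p x0 s t) /\
  (forall s, Gloop n F U p x0 s -> exists2 t, Gloop n F V q x0 t & htpy n F U p x0 s t) /\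
  (forall s t, Gloop n F V q x0 s -> Gloop n F V q x0 t ->
       htpy n F U p x0 s t -> htpy n F V q x0 s t).

(* X_{n - l - 1}, with X_{-oo} = set0 for l = +oo *)
Definition cleave_set (T : Type) (n : nat) (F : int -> set T) (l : option nat) : set T :=
  match l with
  | None => set0
  | Some l => F (n%:Z - l%:Z - 1)
  end.

(* Main.v *)
Require Import Defs.
From HB Require Import structures.
From mathcomp Require Import all_boot all_order all_algebra.
From mathcomp Require Import all_classical all_reals all_analysis.
From mathcomp Require Import Rstruct Rstruct_topology zify.
From Stdlib Require Import Relations.
Set Implicit Arguments. Unset Strict Implicit.
Import Order.TTheory GRing.Theory Num.Theory.
Local Open Scope classical_set_scope.
Local Open Scope ring_scope.

Lemma perv_le (p : nat -> nat) : GM_perversity p -> forall k, (2 <= k)%N -> (p k <= k - 2)%N.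
Proof.
move=> [p2 Hp] k hk; have [m ->] : exists m, k = (m + 2)%N by exists (k - 2)%N; lia.
elim: m => [|m IH]; first by rewrite p2.
have := Hp (m + 2)%N; have -> : ((m.+1 + 2) = (m+2).+1)%N by lia.
move=> /(_ ltac:(lia)) /andP [_ h]; lia.
Qed.

Lemma perv_drop (p : nat -> nat) : GM_perversity p -> forall c, (2 <= c)%N -> p c <> (c - 2)%N ->
  forall m, (p (c + m) < c + m - 2)%N.
Proof.
move=> hp c hc hne m; elim: m => [|m IH].
  rewrite addn0; have := perv_le hp hc; lia.
have := (proj2 hp) (c + m)%N; rewrite addnS => /(_ ltac:(lia)) /andP [_ h]; lia.
Qed.

Lemma cleave_eq (p : nat -> nat) l c : GM_perversity p -> is_cleaving_point p l ->
  (2 <= c)%N -> nbar_le (Some c) l -> p c = (c - 2)%N.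
Proof.
move=> hp [h1 h2] hc hl; apply: contrapT => hne.
have : nbar_le l (Some c.-1).
  apply: h2 => k hk hpk /=; case: (leqP c k) => // hck.
  have := perv_drop hp hc hne (k - c)%N; have -> : (c + (k - c) = k)%N by lia.
  by rewrite hpk /top_perv; lia.
  lia.
by case: l h1 hl {h2} => //= lq _; lia.
Qed.

Lemma cleave_gt (p : nat -> nat) l' c : GM_perversity p -> is_cleaving_point p (Some l') ->
  (l' < c)%N -> (p c < c - 2)%N /\ (2 <= l')%N.
Proof.
move=> hp [h1 h2] hc.
have h2l : (2 <= l')%N by have := h1 2%N isT (proj1 hp); rewrite /top_perv /=; apply.
split=> //.
have := perv_le hp (_ : (2 <= c)%N); move=> /(_ ltac:(lia)) hle.
case: (ltngtP (p c) (c - 2)%N) hle => // heq _.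
have := h1 c ltac:(lia) heq => /=; lia.
Qed.

Lemma pdim_neg m (A : set 'rV[R]_m) d : pdim_le A d -> d < 0 -> A = set0.
Proof. by case: d => [k|k] //= _ H; exfalso; lia. Qed.

Lemma pdim_set0 m d : pdim_le (set0 : set 'rV[R]_m) d.
Proof. case: d => [k|k] //=; exists 0%N; exists (fun _ _ => const_mx 0%R); by move=> ?. Qed.

Lemma F_mono (T : topologicalType) n (F : int -> set T) : filtration n F ->
  forall i i', i <= i' -> F i `<=` F i'.
Proof.
move=> [_ [_ [_ [_ [Hs _]]]]] i i' le.
have [k ->] : exists k : nat, i' = i + k%:Z by exists `|i' - i|%N; lia.
elim: k => [|k IH]; first by rewrite addr0.
apply: subset_trans IH _; have -> : i + k.+1%:Z = (i + k%:Z) + 1 by lia.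
exact: Hs.
Qed.

Lemma F_decomp (T : topologicalType) n (F : int -> set T) : filtration n F ->
  forall m x, F m x -> exists i : nat, i%:Z <= m /\ F i x /\ ~ F (i%:Z - 1) x.
Proof.
move=> hF; have [_ [Hneg _]] := hF.
case=> [k|k] x; last by rewrite Hneg //; lia.
elim: k x => [|k IH] x hx.
  by exists 0%N; split=> //; split=> //; rewrite Hneg.
have [hk|hk] := pselect (F k x).
  by have [i [h1 h2]] := IH x hk; exists i; split=> //; lia.
exists k.+1; split=> //; split=> //.
by have -> : (k.+1%:Z - 1 = k%:Z)%R by lia.
Qed.

Lemma stratum_sub (T : topologicalType) (F : int -> set T) U i S :
  stratum F U i S -> S `<=` U `&` (F i `\` F (i - 1)).
Proof. by case=> x _ ->; apply: connected_component_sub. Qed.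

Lemma stratum_transfer (T : topologicalType) (F : int -> set T) U U' i S :
  (forall x, (F i `\` F (i - 1)) x -> (U x <-> U' x)) ->
  stratum F U i S -> stratum F U' i S.
Proof.
move=> H [x hx ->].
have E : U `&` (F i `\` F (i - 1)) = U' `&` (F i `\` F (i - 1)).
  by apply/seteqP; split=> y [uy ay]; split=> //; apply/(H y ay).
by exists x; rewrite -E.
Qed.

Lemma no_codim1 (T : topologicalType) n (F : int -> set T) U S :
  no_codim_one n F -> ~ stratum F U (n%:Z - 1%:Z) S.
Proof.
move=> h [x [_ [h1 h2]] _].
have : (F (n%:Z - 1) `\` F (n%:Z - 2)) x.
  split=> //; by have <- : (n%:Z - 1%:Z - 1 = n%:Z - 2)%R by lia.
by rewrite h.
Qed.

Lemma face_simplex j (i : 'I_(j.+2)) v : stdsimplex j v -> stdsimplex j.+1 (face_map i v).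
Proof.
move=> [h1 h2]; split.
  by move=> k; rewrite mxE; case: unlift => [k'|] //.
rewrite (bigD1_ord i) //= mxE unlift_none add0r -h2.
by apply: eq_bigr => k _; rewrite mxE liftK.
Qed.

Lemma L_inV (T : topologicalType) n (F : int -> set T) l c x : filtration n F ->
  nbar_le (Some c) l -> (F (n%:Z - c%:Z) `\` F (n%:Z - c%:Z - 1)) x ->
  (~` cleave_set n F l) x.
Proof.
move=> hF; case: l => [l'|] /= hc; last by move=> _ [].
move=> [_ hx] hl; apply: hx.
by apply: (F_mono hF) hl; lia.
Qed.

Lemma L_outV (T : topologicalType) n (F : int -> set T) l' c x : filtration n F ->
  (l' < c)%N -> F (n%:Z - c%:Z) x -> cleave_set n F (Some l') x.
Proof. by move=> hF hc /=; apply: (F_mono hF); lia. Qed.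

Lemma allowA (T : topologicalType) n (F : int -> set T) p l j
    (s : 'rV[R]_(j.+1) -> T) :
  filtration n F -> no_codim_one n F -> GM_perversity p -> is_cleaving_point p l ->
  (forall v, stdsimplex j v -> (~` cleave_set n F l) (s v)) ->
  allowable n F (~` cleave_set n F l) top_perv s -> allowable n F setT p s.
Proof.
move=> hF h1 hp hl himg ha c S hc1 hcn hS.
have hc2 : (2 <= c)%N.
  case: (ltngtP c 1%N) hc1 => // ec _; exfalso; subst c; exact: no_codim1 h1 hS.
have [hin|[l' [el hlt]]] : nbar_le (Some c) l \/ exists l', l = Some l' /\ (l' < c)%N.
  by case: l hl {himg ha} => [l'|] /=; [case: (leqP c l') => h; [left|right; exists l']|left].
- have ep := cleave_eq hp hl hc2 hin.
  rewrite ep; have := ha c S hc1 hcn; rewrite /top_perv; apply.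
  apply: stratum_transfer hS => x hx; split=> // _; exact: L_inV hF hin hx.
- subst l; suff -> : stdsimplex j `&` s @^-1` S = set0 by apply: pdim_set0.
  apply/seteqP; split=> // v [hv hsv].
  have [_ [hF' _]] := stratum_sub hS hsv.
  by apply: (himg v hv); apply: L_outV hF hlt hF'.
Qed.

Lemma allowB (T : topologicalType) n (F : int -> set T) p l j
    (s : 'rV[R]_(j.+1) -> T) :
  filtration n F -> no_codim_one n F -> GM_perversity p -> is_cleaving_point p l ->
  allowable n F setT p s -> allowable n F (~` cleave_set n F l) top_perv s.
Proof.
move=> hF h1 hp hl ha c S hc1 hcn hS.
have hc2 : (2 <= c)%N.
  case: (ltngtP c 1%N) hc1 => // ec _; exfalso; subst c; exact: no_codim1 h1 hS.
have [hin|[l' [el hlt]]] : nbar_le (Some c) l \/ exists l', l = Some l' /\ (l' < c)%N.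
  by case: l hl {ha hS} => [l'|] /=; [case: (leqP c l') => h; [left|right; exists l']|left].
- have ep := cleave_eq hp hl hc2 hin.
  rewrite /top_perv -ep; have := ha c S hc1 hcn; apply.
  apply: stratum_transfer hS => x hx; split=> // _; exact: L_inV hF hin hx.
- subst l; exfalso; case: hS => x [hV [hx _]] _.
  by apply: hV; apply: L_outV hF hlt hx.
Qed.

Lemma imgB (T : topologicalType) n (F : int -> set T) p l j
    (s : 'rV[R]_(j.+1) -> T) :
  filtration n F -> GM_perversity p -> is_cleaving_point p l -> (j <= 2)%N ->
  allowable n F setT p s -> forall v, stdsimplex j v -> (~` cleave_set n F l) (s v).
Proof.
move=> hF hp hl hj ha v hv.
case: l hl => [l'|] hl //= hx.
have [i [hi [hFi hFi1]]] := F_decomp hF hx.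
set c := (n - i)%N.
have hic : (n%:Z - c%:Z = i%:Z)%R by rewrite /c; lia.
have hlt : (l' < c)%N by rewrite /c; lia.
have [hpc hl2] := cleave_gt hp hl hlt.
pose S := connected_component (setT `&` (F i `\` F (i%:Z - 1))) (s v).
have hS : stratum F setT (n%:Z - c%:Z) S.
  by rewrite hic; exists (s v).
have := ha c S ltac:(rewrite /c; lia) ltac:(rewrite /c; lia) hS.
move/pdim_neg => /(_ ltac:(lia)) E.
have : (stdsimplex j `&` s @^-1` S) v.
  by split=> //; apply: connected_component_refl.
by rewrite E.
Qed.

Lemma fullA (T : topologicalType) n (F : int -> set T) p l :
  filtration n F -> no_codim_one n F -> GM_perversity p -> is_cleaving_point p l ->
  forall j (s : 'rV[R]_(j.+1) -> T),
  (forall v, stdsimplex j v -> (~` cleave_set n F l) (s v)) ->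
  full n F (~` cleave_set n F l) top_perv s -> full n F setT p s.
Proof.
move=> hF h1 hp hl; elim=> [|j IH] s himg /=.
  exact: allowA.
move=> [ha hf]; split; first exact: allowA ha.
move=> i; apply: IH (hf i) => v hv; apply: himg; exact: face_simplex.
Qed.

Lemma fullB (T : topologicalType) n (F : int -> set T) p l :
  filtration n F -> no_codim_one n F -> GM_perversity p -> is_cleaving_point p l ->
  forall j (s : 'rV[R]_(j.+1) -> T),
  full n F setT p s -> full n F (~` cleave_set n F l) top_perv s.
Proof.
move=> hF h1 hp hl; elim=> [|j IH] s /=.
  exact: allowB.
move=> [ha hf]; split; first exact: allowB ha.
move=> i; exact: IH.
Qed.

Lemma full_allow (T : topologicalType) n (F : int -> set T) U p j (s : 'rV[R]_(j.+1) -> T) :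
  full n F U p s -> allowable n F U p s.
Proof. by case: j s => [|j] s //= []. Qed.

Lemma Gsimplex_iff (T : topologicalType) n (F : int -> set T) p l j
    (s : 'rV[R]_(j.+1) -> T) :
  filtration n F -> no_codim_one n F -> GM_perversity p -> is_cleaving_point p l ->
  (j <= 2)%N ->
  Gsimplex n F (~` cleave_set n F l) top_perv s <-> Gsimplex n F setT p s.
Proof.
move=> hF h1 hp hl hj; split.
  move=> [[hc himg] hf]; split; first by split.
  exact: fullA hf.
move=> [[hc _] hf]; split; last exact: fullB hf.
split=> //; apply: imgB hF hp hl hj _; exact: full_allow hf.
Qed.

Lemma crst_mono (A : Type) (R1 R2 : relation A) :
  (forall x y, R1 x y -> R2 x y) ->
  forall x y, clos_refl_sym_trans A R1 x y -> clos_refl_sym_trans A R2 x y.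
Proof.
move=> H x y; elim=> [a b /H h|a|a b _ IH|a b c _ IH1 _ IH2].
- exact: rst_step.
- exact: rst_refl.
- exact: rst_sym.
- exact: rst_trans IH1 IH2.
Qed.

Theorem mainTheorem9 (T : topologicalType) (n : nat) (F : int -> set T)
    (p : nat -> nat) (x0 : T) (l : option nat) :
  filtration n F ->
  no_codim_one n F ->
  GM_perversity p ->
  ~ F (n%:Z - 1) x0 ->
  is_cleaving_point p l ->
  pi1_incl_iso n F (~` cleave_set n F l) top_perv setT p x0.
Proof.
move=> hF h1 hp _ hl.
have GL : forall s, Gloop n F (~` cleave_set n F l) top_perv x0 s <-> Gloop n F setT p x0 s.
  move=> s; rewrite /Gloop (Gsimplex_iff (j := 1%N) s hF h1 hp hl isT).
  by split.
have EH : forall s t, elem_htpy n F (~` cleave_set n F l) top_perv x0 s t <->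
                      elem_htpy n F setT p x0 s t.
  move=> s t; rewrite /elem_htpy; split; case=> [h|[w [hw hr]]]; (try by left); right;
    exists w; split=> //; move: hw; rewrite (Gsimplex_iff (j := 2%N) w hF h1 hp hl isT) //.
have HT : forall s t, htpy n F (~` cleave_set n F l) top_perv x0 s t <->
                      htpy n F setT p x0 s t.
  move=> s t; split; apply: crst_mono => a b [ha [hb he]];
    (split; [by apply/GL|split; [by apply/GL|by apply/EH]]).
split; first by move=> s /GL.
split; first by move=> s t _ _ /HT.
split; first by move=> s hs; exists s; [apply/GL|apply: rst_refl].
by move=> s t _ _ /HT.
Qed.
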